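(* Let $(H,+,\circ)$ be a commutative multiplicative hyperring with identity and let $P$ be a strong $\mathcal{C}$-hyperideal of $H$. Then: (i) if $K\subseteq H$ is a multiplicative hyperring (under the restricted operations) and $P$ is an sdf-absorbing hyperideal of $H$, then $P\cap K$ is an sdf-absorbing hyperideal of $K$; (ii) if $Q$ is a hyperideal of $H$ with $Q\subseteq P$ and $P$ is an sdf-absorbing hyperideal of $H$, then $P/Q$ is an sdf-absorbing hyperideal of $H/Q$; (iii) if $Q$ is a hyperideal of $H$ with $Q\subsetneq P$, then $P$ is an sdf-absorbing hyperideal of $H$ if and only if $P/Q$ is an sdf-absorbing hyperideal of $H/Q$.
   Context: A commutative multiplicative hyperring $(H,+,\circ)$ consists of an abelian group $(H,+)$ and an associative, commutative hyperoperation $\circ: H\times H\to P^*(H)$ with $x\circ(y+z)\subseteq x\circ y+x\circ z$ and $x\circ(-y)=-(x\circ y)=(-x)\circ y$. For subsets $A,B$, $A\circ B=\bigcup_{a\in A,b\in B}a\circ b$, $A\pm B=\{a\pm b\}$; $x^2=x\circ x$. Identity: $x\in x\circ 1$ for all $x$. A hyperideal is a nonempty $P$ with $x-y\in P$ and $r\circ x\subseteq P$ for $x,y\in P$, $r\in H$. For a hyperideal $Q$, $H/Q=\{x+Q\}$ with coset addition and $(x+Q)*(y+Q)=\{z+Q: z\in x\circ y\}$, and $P/Q=\{x+Q: x\in P\}$. Let $\mathcal{C}=\{c_1\circ\cdots\circ c_n: c_i\in H\}$ and $\mathfrak{C}=\{\sum_{i=1}^m C_i: C_i\in\mathcal{C}\}$;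 $P$ is a strong $\mathcal{C}$-hyperideal if for every $D\in\mathfrak{C}$, $D\cap P\neq\varnothing$ implies $D\subseteq P$. A proper hyperideal $P$ is sdf-absorbing if whenever $0\neq x,y$ and $x^2-y^2\subseteq P$, then $x-y\in P$ or $x+y\in P$. *)

(* Defs.v *)
(* Hyperrings are encoded as records with raw operations;
   the hyperoperation is a ternary relation: [hmul x y z] means z \in x o y. *)
From Stdlib Require Import List ClassicalEpsilon.
Import ListNotations.

Set Implicit Arguments.

Record hr := HR {
  car :> Type;
  hzero : car;
  hadd : car -> car -> car;
  hopp : car -> car;
  hmul : car -> car -> car -> Prop }.

Arguments hzero {h}.
Arguments hadd {h}.
Arguments hopp {h}.
Arguments hmul {h}.

Section Gen.
Variable R : hr.

Definition hsub (x y : R) : R := hadd x (hopp y).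

Definition is_cmhr : Prop :=
  (forall x y z : R, hadd x (hadd y z) = hadd (hadd x y) z) /\
  (forall x y : R, hadd x y = hadd y x) /\
  (forall x : R, hadd x hzero = x) /\
  (forall x : R, hadd x (hopp x) = hzero) /\
  (forall x y : R, exists z, hmul x y z) /\
  (* associativity: x o (y o z) = (x o y) o z *)
  (forall x y z w : R,
     (exists u, hmul y z u /\ hmul x u w) <-> (exists u, hmul x y u /\ hmul u z w)) /\
  (forall x y z : R, hmul x y z <-> hmul y x z) /\
  (* x o (y + z) \subseteq x o y + x o z *)
  (forall x y z w : R, hmul x (hadd y z) w ->
     exists a b, hmul x y a /\ hmul x z b /\ w = hadd a b) /\
  (forall x y w : R, hmul x (hopp y) w <-> hmul x y (hopp w)) /\
  (forall x y w : R, hmul (hopp x) y w <-> hmul x y (hopp w)).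

Definition hyperideal (P : R -> Prop) : Prop :=
  (exists x, P x) /\
  (forall x y, P x -> P y -> P (hsub x y)) /\
  (forall r x z, P x -> hmul r x z -> P z).

Definition proper (P : R -> Prop) : Prop := exists x, ~ P x.

Definition sdf_absorbing (P : R -> Prop) : Prop :=
  hyperideal P /\ proper P /\
  (forall x y : R, x <> hzero -> y <> hzero ->
     (forall a b, hmul x x a -> hmul y y b -> P (hsub a b)) ->
     P (hsub x y) \/ P (hadd x y)).

(* c o d_1 o ... o d_n  (all finite hyperproducts c_1 o ... o c_n, n >= 1) *)
Fixpoint hprod (c : R) (s : list R) : R -> Prop :=
  match s with
  | [] => fun z => z = c
  | d :: s' => fun w => exists u, hprod c s' u /\ hmul u d w
  end.

(* finite sums C_1 + ... + C_m (m >= 1) of elements of the family \mathcal{C} *)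
Fixpoint sumC (p : R * list R) (l : list (R * list R)) : R -> Prop :=
  match l with
  | [] => hprod (fst p) (snd p)
  | q :: l' => fun z => exists a b,
      hprod (fst p) (snd p) a /\ sumC q l' b /\ z = hadd a b
  end.

Definition strongC_hyperideal (P : R -> Prop) : Prop :=
  hyperideal P /\
  forall p l, (exists z, sumC p l z /\ P z) -> forall z, sumC p l z -> P z.

End Gen.
Arguments hsub {R}.
Arguments hyperideal {R}.
Arguments proper {R}.
Arguments sdf_absorbing {R}.
Arguments strongC_hyperideal {R}.
Arguments hprod {R}.
Arguments sumC {R}.
Arguments is_cmhr : clear implicits.

Definition subHR {H : hr} (K : H -> Prop) (K0 : K hzero)
  (Kadd : forall x y, K x -> K y -> K (hadd x y))
  (Kopp : forall x, K x -> K (hopp x)) : hr :=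
  @HR {x : H | K x}
    (exist _ hzero K0)
    (fun x y => exist _ (hadd (proj1_sig x) (proj1_sig y))
                        (Kadd _ _ (proj2_sig x) (proj2_sig y)))
    (fun x => exist _ (hopp (proj1_sig x)) (Kopp _ (proj2_sig x)))
    (fun x y z => hmul (proj1_sig x) (proj1_sig y) (proj1_sig z)).

(* The quotient H/Q: elements are the cosets x + Q *)
Definition coset {H : hr} (Q : H -> Prop) (x : H) : H -> Prop :=
  fun z => Q (hsub z x).

Definition qcar {H : hr} (Q : H -> Prop) : Type :=
  {S : H -> Prop | exists x, S = coset Q x}.

Definition mkcoset {H : hr} (Q : H -> Prop) (x : H) : qcar Q :=
  exist _ (coset Q x) (ex_intro _ x eq_refl).

Definition crep {H : hr} (Q : H -> Prop) (S : qcar Q) : H :=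
  proj1_sig (constructive_indefinite_description _ (proj2_sig S)).

Definition quotHR {H : hr} (Q : H -> Prop) : hr :=
  @HR (qcar Q)
    (mkcoset Q hzero)
    (fun S T => mkcoset Q (hadd (crep S) (crep T)))
    (fun S => mkcoset Q (hopp (crep S)))
    (* (x+Q) * (y+Q) = { z + Q : z \in x o y } *)
    (fun S T W => exists z, hmul (crep S) (crep T) z /\ proj1_sig W = coset Q z).

Definition quotP {H : hr} (Q P : H -> Prop) : quotHR Q -> Prop :=
  fun S => exists x, P x /\ proj1_sig S = coset Q x.

Arguments quotP {H} Q P _.
Arguments quotHR {H} Q.
Arguments mkcoset {H} Q x.
Arguments crep {H} Q S.
Arguments coset {H} Q x _.

(* Main.v *)
Require Import Defs.
From Stdlib Require Import FunctionalExtensionality PropExtensionality ProofIrrelevance Classical ClassicalEpsilon.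

Ltac dH hH := let A := fresh "A" in let C := fresh "C" in let Z := fresh "Z" in
  let N := fresh "N" in destruct hH as (A & C & Z & N & _).

Lemma add0l {H : hr} (hH : is_cmhr H) (x : H) : hadd hzero x = x.
Proof. dH hH. rewrite C; apply Z. Qed.

Lemma addNl {H : hr} (hH : is_cmhr H) (x : H) : hadd (hopp x) x = hzero.
Proof. dH hH. rewrite C; apply N. Qed.

Lemma add_cancel {H : hr} (hH : is_cmhr H) (x y z : H) : hadd x y = hadd x z -> y = z.
Proof. intro E. assert (E2 : hadd (hopp x) (hadd x y) = hadd (hopp x) (hadd x z)) by (rewrite E; reflexivity).
  pose proof (add0l hH y) as L1. pose proof (add0l hH z) as L2. pose proof (addNl hH x) as L3.
  dH hH. rewrite !A, L3, L1, L2 in E2. exact E2. Qed.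

Lemma oppK {H : hr} (hH : is_cmhr H) (x : H) : hopp (hopp x) = x.
Proof. apply (add_cancel hH (hopp x)). pose proof (addNl hH x). dH hH. rewrite N. auto. Qed.

Lemma opp0 {H : hr} (hH : is_cmhr H) : hopp (@hzero H) = hzero.
Proof. apply (add_cancel hH hzero). pose proof (add0l hH hzero). dH hH. rewrite N. auto. Qed.

Lemma oppD {H : hr} (hH : is_cmhr H) (x y : H) : hopp (hadd x y) = hadd (hopp x) (hopp y).
Proof. apply (add_cancel hH (hadd x y)). pose proof (addNl hH y) as L. pose proof (add0l hH (hopp y)) as L0.
  dH hH. rewrite N. rewrite (C (hopp x)), A, <- (A x), N, Z, N. reflexivity. Qed.

Lemma add_perm {H : hr} (hH : is_cmhr H) (a b c d : H) :
  hadd (hadd a b) (hadd c d) = hadd (hadd a c) (hadd b d).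
Proof. dH hH. rewrite !A. f_equal. rewrite <- !A. f_equal. apply C. Qed.

Definition eqv {H : hr} (Q : H -> Prop) (a b : H) := Q (hsub a b).

Section HI. End HI.

Lemma I0 {H : hr} (hH : is_cmhr H) {I : H -> Prop} : hyperideal I -> I hzero.
Proof. intros (ne & sb & _). destruct ne as [x hx]. specialize (sb x x hx hx). unfold hsub in sb.
  dH hH. rewrite N in sb. exact sb. Qed.

Lemma Iopp {H : hr} (hH : is_cmhr H) {I : H -> Prop} {x} : hyperideal I -> I x -> I (hopp x).
Proof. intros hI hx. pose proof (I0 hH hI) as h0. destruct hI as (_ & sb & _).
  specialize (sb _ _ h0 hx). unfold hsub in sb. rewrite (add0l hH) in sb. exact sb. Qed.

Lemma Iadd {H : hr} (hH : is_cmhr H) {I : H -> Prop} {x y} : hyperideal I -> I x -> I y -> I (hadd x y).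
Proof. intros hI hx hy. pose proof (Iopp hH hI hy) as h. destruct hI as (_ & sb & _).
  specialize (sb _ _ hx h). unfold hsub in sb. rewrite (oppK hH) in sb. exact sb. Qed.

Lemma Imul {H : hr} (hH : is_cmhr H) {I : H -> Prop} {r x z} : hyperideal I -> I x -> hmul r x z -> I z.
Proof. intros (_ & _ & m) hx hz. eauto. Qed.

Lemma Imul' {H : hr} (hH : is_cmhr H) {I : H -> Prop} {r x z} : hyperideal I -> I x -> hmul x r z -> I z.
Proof. intros (_ & _ & m) hx hz. apply (m r x z hx). destruct hH as (_&_&_&_&_&_&Cm&_). apply Cm, hz. Qed.

Lemma eqv_refl {H : hr} (hH : is_cmhr H) {I : H -> Prop} a : hyperideal I -> eqv I a a.
Proof. intro hI. unfold eqv, hsub. pose proof (I0 hH hI). dH hH. rewrite N. auto. Qed.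

Lemma sub_opp {H : hr} (hH : is_cmhr H) (a b : H) : hopp (hsub a b) = hsub b a.
Proof. unfold hsub. rewrite (oppD hH), (oppK hH). dH hH. apply C. Qed.

Lemma eqv_sym {H : hr} (hH : is_cmhr H) {I : H -> Prop} {a b} : hyperideal I -> eqv I a b -> eqv I b a.
Proof. intros hI h. unfold eqv in *. rewrite <- (sub_opp hH). apply (Iopp hH hI h). Qed.

Lemma sub_trans {H : hr} (hH : is_cmhr H) (a b c : H) : hadd (hsub a b) (hsub b c) = hsub a c.
Proof. unfold hsub. pose proof (addNl hH b) as L. dH hH. rewrite <- A, (A (hopp b)), L, (C hzero), Z. reflexivity. Qed.

Lemma eqv_trans {H : hr} (hH : is_cmhr H) {I : H -> Prop} {a b c} : hyperideal I -> eqv I a b -> eqv I b c -> eqv I a c.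
Proof. intros hI h1 h2. unfold eqv in *. rewrite <- (sub_trans hH a b c). apply (Iadd hH hI h1 h2). Qed.

Lemma eqv_add {H : hr} (hH : is_cmhr H) {I : H -> Prop} {a a' b b'} : hyperideal I -> eqv I a a' -> eqv I b b' ->
  eqv I (hadd a b) (hadd a' b').
Proof. intros hI h1 h2. unfold eqv, hsub in *. rewrite (oppD hH), (add_perm hH). apply (Iadd hH hI h1 h2). Qed.

Lemma eqv_opp {H : hr} (hH : is_cmhr H) {I : H -> Prop} {a a'} : hyperideal I -> eqv I a a' ->
  eqv I (hopp a) (hopp a').
Proof. intros hI h1. unfold eqv, hsub in *. rewrite <- (oppD hH). apply (Iopp hH hI h1). Qed.

Lemma eqv_sub {H : hr} (hH : is_cmhr H) {I : H -> Prop} {a a' b b'} : hyperideal I -> eqv I a a' -> eqv I b b' ->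
  eqv I (hsub a b) (hsub a' b').
Proof. intros. unfold hsub at 1 2. apply eqv_add; auto. apply eqv_opp; auto. Qed.

Lemma eqv_mem {H : hr} (hH : is_cmhr H) {I : H -> Prop} {a b} : hyperideal I -> eqv I a b -> I a -> I b.
Proof. intros hI h ha. unfold eqv in h.
  assert (E2 : hsub a (hsub a b) = b).
  { unfold hsub. rewrite (oppD hH), (oppK hH). pose proof (add0l hH b) as L. dH hH. rewrite A, N. exact L. }
  rewrite <- E2. destruct hI as (_ & sb & _). auto. Qed.

Lemma eqv0 {H : hr} (hH : is_cmhr H) {I : H -> Prop} {a} : I a -> eqv I a hzero.
Proof. intro h. unfold eqv, hsub. rewrite (opp0 hH). destruct hH as (_&_&Z&_). rewrite Z. exact h. Qed.

Lemma eqv0' {H : hr} (hH : is_cmhr H) {I : H -> Prop} {a} : eqv I a hzero -> I a.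
Proof. intro h. unfold eqv, hsub in h. rewrite (opp0 hH) in h. destruct hH as (_&_&Z&_). rewrite Z in h. exact h. Qed.

Lemma add_sub {H : hr} (hH : is_cmhr H) (r u : H) : hadd u (hsub r u) = r.
Proof. unfold hsub. pose proof (addNl hH u) as L. dH hH. rewrite (C r), A, N, (C hzero). apply Z. Qed.

Lemma sq_sub {H : hr} (hH : is_cmhr H) {P : H -> Prop} {u r z} : hyperideal P ->
  (forall c, hmul u u c -> P c) -> P (hsub r u) -> hmul r r z -> P z.
Proof. intros hP hu hp hz. pose proof (add_sub hH r u) as E. set (p := hsub r u) in *.
  pose proof hH as hH'. destruct hH' as (_&_&_&_&_&_&Cm&D&_).
  rewrite <- E in hz at 2. destruct (D _ _ _ _ hz) as (a & b & ha & hb & ->).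
  apply (Iadd hH hP).
  - apply Cm in ha. rewrite <- E in ha. destruct (D _ _ _ _ ha) as (c & d & hc & hd & ->).
    apply (Iadd hH hP); auto. apply (Imul hH hP hp hd).
  - apply (Imul hH hP hp hb). Qed.

Lemma sqM {H : hr} (hH : is_cmhr H) {Q : H -> Prop} {x r z} : hyperideal Q ->
  eqv Q r x -> hmul r r z -> exists a, hmul x x a /\ eqv Q z a.
Proof. intros hQ hq hz. pose proof (add_sub hH r x) as E. unfold eqv in hq. set (q := hsub r x) in *.
  pose proof hH as hH'. destruct hH' as (_&_&Z&_&_&_&Cm&D&_).
  rewrite <- E in hz at 2. destruct (D _ _ _ _ hz) as (z1 & z2 & h1 & h2 & ->).
  apply Cm in h1. rewrite <- E in h1. destruct (D _ _ _ _ h1) as (a & z3 & ha & h3 & ->).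
  exists a. split; auto. rewrite <- (Z a) at 2. rewrite <- (Z a) at 2.
  apply (eqv_add hH hQ). apply (eqv_add hH hQ). apply (eqv_refl hH a hQ).
  all: apply (eqv0 hH); eapply (Imul hH hQ hq); eauto. Qed.

Lemma eqv_addP {H : hr} (hH : is_cmhr H) {I : H -> Prop} {p} (u : H) : hyperideal I -> I p -> eqv I (hadd u p) u.
Proof. intros hI hp. pose proof (eqv_add hH hI (eqv_refl hH u hI) (eqv0 hH hp)) as e.
  destruct hH as (_&_&Z&_). rewrite Z in e. exact e. Qed.

Lemma crep_spec {H : hr} (Q : H -> Prop) (S : quotHR Q) : proj1_sig S = coset Q (crep Q S).
Proof. unfold crep. destruct (constructive_indefinite_description _ _) as [r hr]. simpl. exact hr. Qed.

Lemma coset_eqv {H : hr} (hH : is_cmhr H) {Q : H -> Prop} {a b} : hyperideal Q ->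
  coset Q a = coset Q b -> eqv Q a b.
Proof. intros hQ E. unfold eqv. change (coset Q b a). rewrite <- E. exact (eqv_refl hH a hQ). Qed.

Lemma eqv_coset {H : hr} (hH : is_cmhr H) {Q : H -> Prop} {a b} : hyperideal Q ->
  eqv Q a b -> coset Q a = coset Q b.
Proof. intros hQ e. apply functional_extensionality; intro z. apply propositional_extensionality.
  unfold coset. split; intro h.
  - exact (eqv_trans hH hQ h e).
  - exact (eqv_trans hH hQ h (eqv_sym hH hQ e)). Qed.

Lemma crep_mk {H : hr} (hH : is_cmhr H) {Q : H -> Prop} (a : H) : hyperideal Q ->
  eqv Q (crep Q (mkcoset Q a)) a.
Proof. intro hQ. pose proof (crep_spec Q (mkcoset Q a)) as E. simpl in E.
  apply (eqv_sym hH hQ). exact (coset_eqv hH hQ E). Qed.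

Lemma crep_coset {H : hr} (hH : is_cmhr H) {Q : H -> Prop} (S : quotHR Q) z : hyperideal Q ->
  proj1_sig S = coset Q z -> eqv Q (crep Q S) z.
Proof. intros hQ E. rewrite (crep_spec Q S) in E. exact (coset_eqv hH hQ E). Qed.

Lemma qeq {H : hr} {Q : H -> Prop} (S T : quotHR Q) : proj1_sig S = proj1_sig T -> S = T.
Proof. destruct S as [S hS], T as [T hT]. simpl. intros ->. f_equal. apply proof_irrelevance. Qed.

Lemma crep_sub {H : hr} (hH : is_cmhr H) {Q : H -> Prop} (S T : quotHR Q) : hyperideal Q ->
  eqv Q (crep Q (hsub S T)) (hsub (crep Q S) (crep Q T)).
Proof. intro hQ. eapply (eqv_trans hH hQ). apply (crep_mk hH). exact hQ.
  apply (eqv_add hH hQ). apply (eqv_refl hH _ hQ). apply (crep_mk hH). exact hQ. Qed.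

Lemma crep_add {H : hr} (hH : is_cmhr H) {Q : H -> Prop} (S T : quotHR Q) : hyperideal Q ->
  eqv Q (crep Q (hadd S T)) (hadd (crep Q S) (crep Q T)).
Proof. intro hQ. apply (crep_mk hH). exact hQ. Qed.

Lemma quotP_iff {H : hr} (hH : is_cmhr H) {Q P : H -> Prop} (S : quotHR Q) : hyperideal Q -> hyperideal P ->
  (forall x, Q x -> P x) -> (quotP Q P S <-> P (crep Q S)).
Proof. intros hQ hP QP. split.
  - intros [x [hx E]]. apply (eqv_mem hH hP (QP _ (eqv_sym hH hQ (crep_coset hH S x hQ E))) hx).
  - intro h. exists (crep Q S). split; auto. apply crep_spec. Qed.

Lemma Isub {H : hr} {I : H -> Prop} {x y : H} : hyperideal I -> I x -> I y -> I (hsub x y).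
Proof. intros (_ & sb & _). auto. Qed.

Lemma qnz {H : hr} (hH : is_cmhr H) {Q : H -> Prop} (X : quotHR Q) : hyperideal Q ->
  X <> hzero -> ~ Q (crep Q X).
Proof. intros hQ hX hq. apply hX. apply qeq. rewrite crep_spec. simpl.
  apply (eqv_coset hH hQ). apply (eqv0 hH hq). Qed.

Lemma part2 {H : hr} (hH : is_cmhr H) (Q P : H -> Prop) : hyperideal Q -> (forall x, Q x -> P x) ->
  sdf_absorbing P -> sdf_absorbing (quotP Q P).
Proof. intros hQ QP (hP & [x0 hx0] & sd). split; [|split].
  - split; [|split].
    + exists (mkcoset Q hzero). apply (quotP_iff hH _ hQ hP QP).
      apply (eqv_mem hH hP (QP _ (eqv_sym hH hQ (crep_mk hH hzero hQ)))). apply (I0 hH hP).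
    + intros S T hS hT. apply (quotP_iff hH _ hQ hP QP) in hS, hT. apply (quotP_iff hH _ hQ hP QP).
      apply (eqv_mem hH hP (QP _ (eqv_sym hH hQ (crep_sub hH S T hQ)))). apply (Isub hP hS hT).
    + intros R S W hS [z [hz E]]. exists z. split; auto.
      apply (quotP_iff hH _ hQ hP QP) in hS. exact (Imul hH hP hS hz).
  - exists (mkcoset Q x0). intro h. apply (quotP_iff hH _ hQ hP QP) in h. apply hx0.
    exact (eqv_mem hH hP (QP _ (crep_mk hH x0 hQ)) h).
  - intros X Y hX hY hyp.
    assert (nx : crep Q X <> hzero). { intro e. apply (qnz hH X hQ hX). rewrite e. apply (I0 hH hQ). }
    assert (ny : crep Q Y <> hzero). { intro e. apply (qnz hH Y hQ hY). rewrite e. apply (I0 hH hQ). }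
    destruct (sd _ _ nx ny) as [h|h].
    + intros a b ha hb. specialize (hyp (mkcoset Q a) (mkcoset Q b)).
      assert (h1 : hmul X X (mkcoset Q a)) by (exists a; split; auto).
      assert (h2 : hmul Y Y (mkcoset Q b)) by (exists b; split; auto).
      specialize (hyp h1 h2). apply (quotP_iff hH _ hQ hP QP) in hyp.
      refine (eqv_mem hH hP (QP _ _) hyp).
      eapply (eqv_trans hH hQ). apply (crep_sub hH _ _ hQ).
      apply (eqv_sub hH hQ); apply (crep_mk hH _ hQ).
    + left. apply (quotP_iff hH _ hQ hP QP).
      apply (eqv_mem hH hP (QP _ (eqv_sym hH hQ (crep_sub hH X Y hQ)))). exact h.
    + right. apply (quotP_iff hH _ hQ hP QP).
      apply (eqv_mem hH hP (QP _ (eqv_sym hH hQ (crep_add hH X Y hQ)))). exact h.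
Qed.

Lemma key {H : hr} (hH : is_cmhr H) (Q P : H -> Prop) (i u : H) : hyperideal Q -> hyperideal P ->
  (forall x, Q x -> P x) -> P i -> ~ Q i -> sdf_absorbing (quotP Q P) ->
  (forall c, hmul u u c -> P c) -> P u.
Proof. intros hQ hP QP hi nqi (_ & _ & sd) hu.
  destruct (classic (P u)) as [|nu]; auto. exfalso.
  set (X := (mkcoset Q (hadd u i) : quotHR Q)). set (W := (mkcoset Q i : quotHR Q)).
  assert (rX : eqv Q (crep Q X) (hadd u i)) by (apply (crep_mk hH _ hQ)).
  assert (rW : eqv Q (crep Q W) i) by (apply (crep_mk hH _ hQ)).
  assert (eui : eqv P (hadd u i) u) by (apply (eqv_addP hH u hP hi)).
  assert (nX : X <> hzero).
  { intro e. apply nu. assert (h : proj1_sig X = proj1_sig (@hzero (quotHR Q))) by (rewrite e; auto).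
    simpl in h. apply (coset_eqv hH hQ), (eqv0' hH), QP in h. exact (eqv_mem hH hP eui h). }
  assert (nW : W <> hzero).
  { intro e. apply nqi. assert (h : proj1_sig W = proj1_sig (@hzero (quotHR Q))) by (rewrite e; auto).
    simpl in h. apply (coset_eqv hH hQ), (eqv0' hH) in h. exact h. }
  assert (PW : P (crep Q W)) by (exact (eqv_mem hH hP (QP _ (eqv_sym hH hQ rW)) hi)).
  assert (PX : eqv P (crep Q X) u) by (exact (eqv_trans hH hP (QP _ rX) eui)).
  destruct (sd X W nX nW) as [h|h].
  - intros A B [z [hz EA]] [z' [hz' EB]].
    apply (quotP_iff hH _ hQ hP QP).
    refine (eqv_mem hH hP (QP _ (eqv_sym hH hQ (crep_sub hH A B hQ))) _).
    apply (Isub hP).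
    + refine (eqv_mem hH hP (QP _ (eqv_sym hH hQ (crep_coset hH A z hQ EA))) _).
      exact (sq_sub hH hP hu PX hz).
    + refine (eqv_mem hH hP (QP _ (eqv_sym hH hQ (crep_coset hH B z' hQ EB))) _).
      exact (Imul hH hP PW hz').
  - apply (quotP_iff hH _ hQ hP QP) in h. apply nu.
    refine (eqv_mem hH hP _ h).
    eapply (eqv_trans hH hP). apply QP, (crep_sub hH _ _ hQ).
    eapply (eqv_trans hH hP). apply QP, (eqv_sub hH hQ rX rW).
    eapply (eqv_trans hH hP). apply (eqv_addP hH _ hP). apply (Iopp hH hP hi). exact eui.
  - apply (quotP_iff hH _ hQ hP QP) in h. apply nu.
    refine (eqv_mem hH hP _ h).
    eapply (eqv_trans hH hP). apply QP, (crep_add hH _ _ hQ).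
    eapply (eqv_trans hH hP). apply QP, (eqv_add hH hQ rX rW).
    eapply (eqv_trans hH hP). apply (eqv_addP hH _ hP). exact hi. exact eui.
Qed.

Lemma part3 {H : hr} (hH : is_cmhr H) (Q P : H -> Prop) : hyperideal Q -> hyperideal P ->
  (forall x, Q x -> P x) -> (exists x, P x /\ ~ Q x) ->
  sdf_absorbing (quotP Q P) -> sdf_absorbing P.
Proof. intros hQ hP QP [i [hi nqi]] hS. pose proof hS as (_ & [S0 hS0] & sd).
  split; [exact hP|split].
  - exists (crep Q S0). intro h. apply hS0. apply (quotP_iff hH _ hQ hP QP). exact h.
  - intros x y nx ny hyp.
    pose proof hH as (_&_&_&_&NE&_).
    destruct (classic (Q x)) as [qx|nqx].
    + left. apply (Isub hP). apply QP, qx.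
      apply (key hH Q P i y hQ hP QP hi nqi hS).
      intros b hb. destruct (NE x x) as [a ha].
      assert (Pa : P a) by exact (Imul hH hP (QP _ qx) ha).
      exact (eqv_mem hH hP (hyp a b ha hb) Pa).
    + destruct (classic (Q y)) as [qy|nqy].
      * left. apply (Isub hP); [|apply QP, qy].
        apply (key hH Q P i x hQ hP QP hi nqi hS).
        intros a ha. destruct (NE y y) as [b hb].
        assert (Pb : P b) by exact (Imul hH hP (QP _ qy) hb).
        exact (eqv_mem hH hP (eqv_sym hH hP (hyp a b ha hb)) Pb).
      * set (X := (mkcoset Q x : quotHR Q)). set (Y := (mkcoset Q y : quotHR Q)).
        assert (rX : eqv Q (crep Q X) x) by (apply (crep_mk hH _ hQ)).
        assert (rY : eqv Q (crep Q Y) y) by (apply (crep_mk hH _ hQ)).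
        assert (nX : X <> hzero).
        { intro e. apply nqx. assert (h : proj1_sig X = proj1_sig (@hzero (quotHR Q))) by (rewrite e; auto).
          simpl in h. apply (coset_eqv hH hQ), (eqv0' hH) in h. exact h. }
        assert (nY : Y <> hzero).
        { intro e. apply nqy. assert (h : proj1_sig Y = proj1_sig (@hzero (quotHR Q))) by (rewrite e; auto).
          simpl in h. apply (coset_eqv hH hQ), (eqv0' hH) in h. exact h. }
        destruct (sd X Y nX nY) as [h|h].
        -- intros A B [z [hz EA]] [z' [hz' EB]].
           destruct (sqM hH hQ rX hz) as [a [ha ea]].
           destruct (sqM hH hQ rY hz') as [b [hb eb]].
           apply (quotP_iff hH _ hQ hP QP).
           refine (eqv_mem hH hP (QP _ _) (hyp a b ha hb)).
           apply (eqv_sym hH hQ).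
           eapply (eqv_trans hH hQ). apply (crep_sub hH _ _ hQ).
           apply (eqv_sub hH hQ).
           ++ exact (eqv_trans hH hQ (crep_coset hH A z hQ EA) ea).
           ++ exact (eqv_trans hH hQ (crep_coset hH B z' hQ EB) eb).
        -- left. apply (quotP_iff hH _ hQ hP QP) in h.
           refine (eqv_mem hH hP (QP _ _) h).
           eapply (eqv_trans hH hQ). apply (crep_sub hH _ _ hQ). exact (eqv_sub hH hQ rX rY).
        -- right. apply (quotP_iff hH _ hQ hP QP) in h.
           refine (eqv_mem hH hP (QP _ _) h).
           eapply (eqv_trans hH hQ). apply (crep_add hH _ _ hQ). exact (eqv_add hH hQ rX rY).
Qed.

Lemma part1 {H : hr} (hH : is_cmhr H) (P : H -> Prop) (K : H -> Prop) (K0 : K hzero)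
     (Kadd : forall x y, K x -> K y -> K (hadd x y))
     (Kopp : forall x, K x -> K (hopp x))
     (Kmul : forall x y z, K x -> K y -> hmul x y z -> K z) :
     ~ (forall x, K x -> P x) ->
     sdf_absorbing P ->
     @sdf_absorbing (subHR K K0 Kadd Kopp) (fun x => P (proj1_sig x)).
Proof. intros nK (hP & _ & sd). split; [|split].
  - split; [|split].
    + exists (exist _ hzero K0). exact (I0 hH hP).
    + intros [x kx] [y ky] hx hy. exact (Isub hP hx hy).
    + intros [r kr] [x kx] [z kz] hx hz. exact (Imul hH hP hx hz).
  - apply not_all_ex_not in nK. destruct nK as [x hx].
    apply imply_to_and in hx. destruct hx as [kx px]. exists (exist _ x kx). exact px.
  - intros [x kx] [y ky] nx ny hyp. simpl in *.
    apply (sd x y).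
    + intro e. apply nx. subst x. f_equal. apply proof_irrelevance.
    + intro e. apply ny. subst y. f_equal. apply proof_irrelevance.
    + intros a b ha hb.
      exact (hyp (exist _ a (Kmul _ _ _ kx kx ha)) (exist _ b (Kmul _ _ _ ky ky hb)) ha hb).
Qed.

Theorem mainTheorem10 (H : hr) (one : H)
  (hH : is_cmhr H) (hone : forall x : H, hmul x one x)
  (P : H -> Prop) (hP : strongC_hyperideal P) :
  (* (i) *)
  (forall (K : H -> Prop) (K0 : K hzero)
     (Kadd : forall x y, K x -> K y -> K (hadd x y))
     (Kopp : forall x, K x -> K (hopp x))
     (Kmul : forall x y z, K x -> K y -> hmul x y z -> K z),
     ~ (forall x, K x -> P x) ->
     sdf_absorbing P ->
     @sdf_absorbing (subHR K K0 Kadd Kopp) (fun x => P (proj1_sig x)))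
  /\
  (* (ii) *)
  (forall Q : H -> Prop, hyperideal Q -> (forall x, Q x -> P x) ->
     sdf_absorbing P -> sdf_absorbing (quotP Q P))
  /\
  (* (iii) *)
  (forall Q : H -> Prop, hyperideal Q -> (forall x, Q x -> P x) ->
     (exists x, P x /\ ~ Q x) ->
     (sdf_absorbing P <-> sdf_absorbing (quotP Q P))).
Proof.
  split; [|split].
  - intros. apply (part1 hH); auto.
  - intros Q hQ QP hs. exact (part2 hH Q P hQ QP hs).
  - intros Q hQ QP ex. split.
    + intro hs. exact (part2 hH Q P hQ QP hs).
    + intro hs. exact (part3 hH Q P hQ (proj1 hP) QP ex hs).
Qed.
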